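(* Fix $a\ge0$ and $0\le\alpha\le\beta$, and let $\rho(x)=1+x^2$. Then for every $f\in C_\rho^k[0,\infty)$, $$\lim_{n\to\infty}\left\|T_{n,a}^{\alpha,\beta}(f;\cdot)-f\right\|_\rho=\lim_{n\to\infty}\sup_{x\ge0}\frac{|T_{n,a}^{\alpha,\beta}(f;x)-f(x)|}{1+x^2}=0.$$
   Context: Fix $a\ge 0$ and real numbers $\alpha,\beta$ with $0\le\alpha\le\beta$. For $n\in\mathbb N=\{1,2,\dots\}$ let $(n)_0=1$, $(n)_i=n(n+1)\cdots(n+i-1)$, and $p_k(n,a)=\sum_{i=0}^{k}\binom{k}{i}(n)_i a^{k-i}$. For $x\ge0$ and $k=0,1,2,\dots$ put $W_{n,k}^a(x)=e^{-\frac{ax}{1+x}}\frac{p_k(n,a)}{k!}\frac{x^k}{(1+x)^{k+n}}$ (so that $\sum_{k\ge0}W_{n,k}^a(x)=1$). The generalized Baskakov–Kantorovich–Stancu operator is $T_{n,a}^{\alpha,\beta}(f;x)=(n+\beta)\sum_{k=0}^{\infty}W_{n,k}^a(x)\int_{\frac{k+\alpha}{n+\beta}}^{\frac{k+\alpha+1}{n+\beta}}f(t)\,dt$. With the weight $\rho(x)=1+x^2$: $B_\rho[0,\infty)$ is the set of functions $f$ on $[0,\infty)$ with $|f(x)|\le M_f\rho(x)$ for all $x\ge0$ and some constant $M_f$; $C_\rho[0,\infty)$ is the set of continuous functions in $B_\rho[0,\infty)$, normed by $\|f\|_\rho=\sup_{x\ge0}|f(x)|/\rho(x)$; and $C_\rho^k[0,\infty)$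 is the set of $f\in C_\rho[0,\infty)$ for which $\lim_{x\to\infty}f(x)/\rho(x)$ exists and is finite. *)

(* Defs.v *)
From Stdlib Require Import Reals Lra Lia Arith ClassicalEpsilon.
Open Scope R_scope.

Fixpoint rfact (y : R) (i : nat) : R :=
  match i with
  | O => 1
  | S j => rfact y j * (y + INR j)
  end.

Definition pk (k n : nat) (a : R) : R :=
  sum_f_R0 (fun i => C k i * rfact (INR n) i * a ^ (k - i)) k.

Definition W (n k : nat) (a x : R) : R :=
  exp (- (a * x / (1 + x))) * (pk k n a / INR (fact k))
  * (x ^ k / (1 + x) ^ (k + n)).

(* Riemann integral of f over [lo,hi], defined when f is Riemann integrable
   there (value independent of the integrability proof, RiemannInt_P5);
   an unspecified real otherwise. *)
Definition Rint (f : R -> R) (lo hi : R) : R :=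
  epsilon (inhabits 0)
    (fun I => exists pr : Riemann_integrable f lo hi, RiemannInt pr = I).

Definition Tterm (a alpha beta : R) (f : R -> R) (n : nat) (x : R) (k : nat) : R :=
  (INR n + beta) * W n k a x *
  Rint f ((INR k + alpha) / (INR n + beta)) ((INR k + alpha + 1) / (INR n + beta)).

Definition T (a alpha beta : R) (f : R -> R) (n : nat) (x : R) : R :=
  epsilon (inhabits 0) (fun s => infinite_sum (Tterm a alpha beta f n x) s).

Definition rho (x : R) : R := 1 + x ^ 2.

Definition in_B_rho (f : R -> R) : Prop :=
  exists M : R, forall x, 0 <= x -> Rabs (f x) <= M * rho x.

Definition cont_on_nonneg (f : R -> R) : Prop :=
  forall x, 0 <= x -> limit1_in f (fun t => 0 <= t) (f x) x.

Definition in_C_rho_k (f : R -> R) : Prop :=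
  cont_on_nonneg f /\ in_B_rho f /\
  exists L : R, forall eps, eps > 0 -> exists A : R, forall x, A <= x ->
    Rabs (f x / rho x - L) < eps.

(* Main.v *)
Require Import Defs.
From Stdlib Require Import Reals Lra Lia Psatz ZArith ClassicalEpsilon.
From Coquelicot Require Import Coquelicot.
Open Scope R_scope.

Lemma iss_plus (u v : nat -> R) lu lv : is_series u lu -> is_series v lv ->
  is_series (fun n => u n + v n) (lu + lv).
Proof. intros H1 H2. exact (is_series_plus _ _ _ _ H1 H2). Qed.

Lemma iss_scal (c : R) (u : nat -> R) l : is_series u l ->
  is_series (fun n => c * u n) (c * l).
Proof. intros H. exact (is_series_scal c _ _ H). Qed.

Lemma iss_ext (u v : nat -> R) (l l' : R) : (forall n, u n = v n) -> l = l' -> is_series u l -> is_series v l'.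
Proof. intros H1 <- H2. exact (is_series_ext _ _ _ H1 H2). Qed.

Lemma iss_zero : is_series (fun _ : nat => 0) 0.
Proof.
  assert (H := iss_scal 0 _ _ (is_series_geom (1/2) ltac:(rewrite Rabs_pos_eq; lra))).
  eapply iss_ext; [| | exact H]; intros; simpl; ring.
Qed.

Lemma iss_shift (u : nat -> R) l : u 0%nat = 0 -> is_series (fun k => u (S k)) l -> is_series u l.
Proof.
  intros H0 H. apply is_series_decr_1.
  eapply iss_ext; [intros; reflexivity| |exact H]. rewrite H0. change (l = l + - 0)%R. rewrite Ropp_0, Rplus_0_r. reflexivity.
Qed.

Lemma exp_series z : is_series (fun j => z ^ j / INR (Factorial.fact j)) (exp z).
Proof.
  apply is_series_Reals. unfold exp. destruct (exist_exp z) as [l Hl]. simpl.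
  unfold exp_in in Hl. intros e He. destruct (Hl e He) as [N HN]. exists N. intros m Hm.
  specialize (HN m Hm). erewrite sum_eq; [exact HN|]. intros; simpl; unfold Rdiv; ring.
Qed.

Lemma rfact_S y i : rfact y (S i) = y * rfact (y + 1) i.
Proof.
  induction i.
  - simpl. ring.
  - change (rfact y (S (S i))) with (rfact y (S i) * (y + INR (S i))).
    rewrite IHi. simpl rfact. rewrite S_INR. ring.
Qed.

Lemma rfact_nonneg y i : 0 <= y -> 0 <= rfact y i.
Proof.
  intros Hy. induction i; simpl. lra. apply Rmult_le_pos; auto. pose proof (pos_INR i); lra.
Qed.

Definition AA (n i : nat) : R := rfact (INR n) i / INR (Factorial.fact i).
Definition BB (a : R) (j : nat) : R := a ^ j / INR (Factorial.fact j).
Definition cc (a : R) (n k : nat) : R := pk k n a / INR (Factorial.fact k).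

Lemma AA_nonneg n i : 0 <= AA n i.
Proof.
  unfold AA. apply Rdiv_le_0_compat. apply rfact_nonneg, pos_INR.
  apply lt_0_INR. apply Factorial.lt_O_fact.
Qed.

Lemma AA_0 n : AA n 0 = 1.
Proof. unfold AA. simpl. field. Qed.

Lemma AA_S_i n i : INR (S i) * AA n (S i) = INR n * AA (S n) i.
Proof.
  unfold AA. rewrite rfact_S. rewrite (S_INR n). rewrite fact_simpl, mult_INR.
  field. split; [apply INR_fact_neq_0 | apply not_0_INR; lia].
Qed.

Lemma AA_rec n i : AA (S n) (S i) = AA (S n) i + AA n (S i).
Proof.
  unfold AA. rewrite (rfact_S (INR n)). rewrite (S_INR n).
  change (rfact (INR n + 1) (S i)) with (rfact (INR n + 1) i * (INR n + 1 + INR i)).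
  rewrite fact_simpl, mult_INR, S_INR.
  assert (Hf := INR_fact_neq_0 i). assert (Hi := pos_INR i).
  field. split; auto; lra.
Qed.

Lemma iss_decr (u : nat -> R) l l' : u 0%nat + l' = l -> is_series (fun k => u (S k)) l' -> is_series u l.
Proof.
  intros H0 H. apply is_series_decr_1.
  eapply iss_ext; [intros; reflexivity| |exact H].
  change (l' = l + - u 0%nat)%R. lra.
Qed.

Lemma AA_sum n i : AA (S n) i = sum_f_R0 (fun l => AA n l) i.
Proof.
  induction i.
  - simpl. rewrite !AA_0. reflexivity.
  - rewrite tech5, <- IHi. apply AA_rec.
Qed.

Lemma pow_split (s : R) k i : (k <= i)%nat -> s ^ k * s ^ (i - k) = s ^ i.
Proof. intros H. rewrite <- pow_add. f_equal. lia. Qed.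

Lemma A_gen n s : 0 <= s < 1 -> is_series (fun i => AA n i * s ^ i) (/ (1 - s) ^ n).
Proof.
  intros Hs. induction n.
  - apply (iss_decr _ _ 0).
    + rewrite AA_0. simpl. field.
    + eapply iss_ext; [|reflexivity|exact iss_zero]. intros k. simpl.
      unfold AA. rewrite rfact_S. simpl. unfold Rdiv. ring.
  - assert (Hg := is_series_geom s ltac:(rewrite Rabs_pos_eq; lra)).
    assert (H := is_series_mult_pos _ _ _ _ IHn Hg).
    eapply iss_ext; [| |apply H].
    + intros i. simpl. rewrite AA_sum, (Rmult_comm _ (s ^ i)), scal_sum. apply sum_eq. intros k Hk.
      rewrite Rmult_assoc, pow_split by lia. ring.
    + simpl. rewrite Rinv_mult. ring.
    + intros; apply Rmult_le_pos; [apply AA_nonneg|apply pow_le; lra].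
    + intros; apply pow_le; lra.
Qed.

Lemma c_prod a n k : cc a n k = sum_f_R0 (fun i => AA n i * BB a (k - i)) k.
Proof.
  unfold cc, pk. unfold Rdiv at 1. rewrite Rmult_comm, scal_sum. apply sum_eq.
  intros i Hi. unfold Binomial.C, AA, BB.
  assert (H1 := INR_fact_neq_0 i). assert (H2 := INR_fact_neq_0 (k - i)).
  assert (H3 := INR_fact_neq_0 k). field. auto.
Qed.

Lemma BB_nonneg a j : 0 <= a -> 0 <= BB a j.
Proof.
  intros Ha. unfold BB. apply Rdiv_le_0_compat. apply pow_le; auto.
  apply lt_0_INR. apply Factorial.lt_O_fact.
Qed.

Lemma c_gen a n s : 0 <= a -> 0 <= s < 1 ->
  is_series (fun k => cc a n k * s ^ k) (exp (a * s) / (1 - s) ^ n).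
Proof.
  intros Ha Hs.
  assert (HB : is_series (fun j => BB a j * s ^ j) (exp (a * s))).
  { eapply iss_ext; [|reflexivity|apply exp_series]. intros j. unfold BB.
    rewrite Rpow_mult_distr. unfold Rdiv. ring. }
  assert (H := is_series_mult_pos _ _ _ _ (A_gen n s Hs) HB).
  eapply iss_ext; [| |apply H].
  - intros k. simpl. rewrite c_prod, (Rmult_comm _ (s ^ k)), scal_sum. apply sum_eq. intros i Hi.
    rewrite <- (pow_split s i k Hi). ring.
  - unfold Rdiv. apply Rmult_comm.
  - intros; apply Rmult_le_pos; [apply AA_nonneg|apply pow_le; lra].
  - intros; apply Rmult_le_pos; [apply BB_nonneg; auto|apply pow_le; lra].
Qed.

Lemma BB_S a j : INR (S j) * BB a (S j) = a * BB a j.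
Proof.
  unfold BB. rewrite fact_simpl, mult_INR. simpl pow.
  assert (H := INR_fact_neq_0 j). assert (H' : INR (S j) <> 0) by (apply not_0_INR; lia).
  field. auto.
Qed.

Lemma cc_rec a n k : INR (S k) * cc a n (S k) = INR n * cc a (S n) k + a * cc a n k.
Proof.
  rewrite !c_prod.
  transitivity (sum_f_R0 (fun i => (INR i * AA n i) * BB a (S k - i)) (S k)
              + sum_f_R0 (fun i => AA n i * (INR (S k - i) * BB a (S k - i))) (S k)).
  { rewrite <- plus_sum, scal_sum. apply sum_eq. intros i Hi.
    rewrite minus_INR by lia. ring. }
  f_equal.
  - rewrite decomp_sum by lia. simpl pred. rewrite scal_sum.
    replace (INR 0 * AA n 0) with 0 by (simpl; ring). rewrite Rmult_0_l, Rplus_0_l.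
    apply sum_eq. intros i Hi. rewrite AA_S_i. replace (S k - S i)%nat with (k - i)%nat by lia. ring.
  - rewrite tech5. rewrite Nat.sub_diag. replace (INR 0) with 0 by reflexivity.
    rewrite Rmult_0_l, Rmult_0_r, Rplus_0_r. rewrite scal_sum. apply sum_eq. intros i Hi.
    replace (S k - i)%nat with (S (k - i)) by lia. rewrite BB_S. ring.
Qed.

Definition GG a s (m : nat) := exp (a * s) / (1 - s) ^ m.
Definition MM1 a s (m : nat) := s * (INR m * GG a s (S m) + a * GG a s m).

Lemma m1_gen a n s : 0 <= a -> 0 <= s < 1 ->
  is_series (fun k => INR k * cc a n k * s ^ k) (MM1 a s n).
Proof.
  intros Ha Hs. apply iss_shift. simpl; ring.
  assert (H := iss_scal s _ _ (iss_plus _ _ _ _ (iss_scal (INR n) _ _ (c_gen a (S n) s Ha Hs))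
     (iss_scal a _ _ (c_gen a n s Ha Hs)))).
  eapply iss_ext; [|reflexivity|exact H]. intros k. simpl pow.
  replace (INR (S k) * cc a n (S k) * (s * s ^ k)) with (s * s^k * (INR (S k) * cc a n (S k))) by ring.
  rewrite cc_rec. unfold GG. ring.
Qed.

Lemma m2_gen a n s : 0 <= a -> 0 <= s < 1 ->
  is_series (fun k => INR k ^ 2 * cc a n k * s ^ k)
    (s * (INR n * (MM1 a s (S n) + GG a s (S n)) + a * (MM1 a s n + GG a s n))).
Proof.
  intros Ha Hs. apply iss_shift. simpl; ring.
  assert (H := iss_scal s _ _ (iss_plus _ _ _ _
     (iss_scal (INR n) _ _ (iss_plus _ _ _ _ (m1_gen a (S n) s Ha Hs) (c_gen a (S n) s Ha Hs)))
     (iss_scal a _ _ (iss_plus _ _ _ _ (m1_gen a n s Ha Hs) (c_gen a n s Ha Hs))))).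
  eapply iss_ext; [|reflexivity|exact H]. intros k. cbv beta.
  replace (INR (S k) ^ 2 * cc a n (S k) * s ^ S k)
    with (s * s^k * INR (S k) * (INR (S k) * cc a n (S k))) by (simpl; ring).
  rewrite cc_rec. rewrite S_INR. unfold GG. ring.
Qed.

Lemma one_minus_s x : 0 <= x -> 1 - x / (1 + x) = / (1 + x).
Proof. intros. field. lra. Qed.

Lemma s_range x : 0 <= x -> 0 <= x / (1 + x) < 1.
Proof.
  intros Hx. split. apply Rdiv_le_0_compat; lra.
  apply (Rmult_lt_reg_r (1 + x)). lra. unfold Rdiv. rewrite Rmult_assoc, Rinv_l by lra. lra.
Qed.

Lemma W_eq a n k x : 0 <= x ->
  W n k a x = (exp (- (a * (x / (1 + x)))) / (1 + x) ^ n) * (cc a n k * (x / (1 + x)) ^ k).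
Proof.
  intros Hx. unfold W, cc. unfold Rdiv. rewrite Rpow_mult_distr, pow_add, pow_inv.
  replace (a * x * / (1 + x)) with (a * (x * / (1 + x))) by ring.
  rewrite Rinv_mult. ring.
Qed.

Lemma exp_inv_prod z : exp (- z) * exp z = 1.
Proof. rewrite <- exp_plus. replace (- z + z) with 0 by ring. apply exp_0. Qed.

Lemma mom0 a n x : 0 <= a -> 0 <= x -> is_series (fun k => W n k a x) 1.
Proof.
  intros Ha Hx. set (s := x / (1 + x)).
  assert (H := iss_scal (exp (- (a * s)) / (1 + x) ^ n) _ _ (c_gen a n s Ha (s_range x Hx))).
  eapply iss_ext; [|  |exact H].
  - intros k. rewrite W_eq by auto. reflexivity.
  - unfold s. rewrite one_minus_s by auto. rewrite pow_inv.
    assert (Hp : (1 + x) ^ n <> 0) by (apply pow_nonzero; lra).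
    assert (He := exp_inv_prod (a * (x / (1 + x)))).
    rewrite exp_Ropp. assert (Hq := exp_pos (a * (x / (1 + x)))).
    field. split; lra.
Qed.

Lemma mom1 a n x : 0 <= a -> 0 <= x ->
  is_series (fun k => W n k a x * INR k) (INR n * x + a * (x / (1 + x))).
Proof.
  intros Ha Hx. set (s := x / (1 + x)).
  assert (H := iss_scal (exp (- (a * s)) / (1 + x) ^ n) _ _ (m1_gen a n s Ha (s_range x Hx))).
  eapply iss_ext; [|  |exact H].
  - intros k. rewrite W_eq by auto. fold s. ring.
  - unfold MM1, GG. simpl pow. unfold s. rewrite one_minus_s by auto. rewrite pow_inv.
    assert (Hp : (1 + x) ^ n <> 0) by (apply pow_nonzero; lra).
    rewrite exp_Ropp. assert (Hq := exp_pos (a * (x / (1 + x)))).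
    field. split; lra.
Qed.

Lemma mom2 a n x : 0 <= a -> 0 <= x ->
  is_series (fun k => W n k a x * INR k ^ 2)
   (INR n * (INR n + 1) * x ^ 2 + 2 * a * INR n * x * (x / (1 + x))
    + a ^ 2 * (x / (1 + x)) ^ 2 + INR n * x + a * (x / (1 + x))).
Proof.
  intros Ha Hx. set (s := x / (1 + x)).
  assert (H := iss_scal (exp (- (a * s)) / (1 + x) ^ n) _ _ (m2_gen a n s Ha (s_range x Hx))).
  eapply iss_ext; [|  |exact H].
  - intros k. rewrite W_eq by auto. fold s. ring.
  - unfold MM1, GG. simpl pow. rewrite S_INR. unfold s. rewrite one_minus_s by auto. rewrite pow_inv.
    assert (Hp : (1 + x) ^ n <> 0) by (apply pow_nonzero; lra).
    rewrite exp_Ropp. assert (Hq := exp_pos (a * (x / (1 + x)))).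
    field. split; lra.
Qed.

Lemma fe_cont f : cont_on_nonneg f -> forall y, continuity_pt (fun t => f (Rmax 0 t)) y.
Proof.
  intros hf y. unfold continuity_pt, continue_in, limit1_in, limit_in. simpl. unfold Rdist.
  intros e He. destruct (Rle_lt_dec 0 y) as [Hy|Hy].
  - destruct (hf y Hy e He) as [al [Hal H]]. exists al. split; auto.
    intros t [_ Ht]. rewrite (Rmax_right 0 y Hy). apply H. simpl. unfold Rdist. split.
    apply Rmax_l. unfold Rmax. destruct (Rle_dec 0 t).
    + auto.
    + apply Rabs_def2 in Ht. apply Rabs_def1; lra.
  - exists (- y). split. lra. intros t [_ Ht]. apply Rabs_def2 in Ht.
    rewrite (Rmax_left 0 t) by lra. rewrite (Rmax_left 0 y) by lra.
    rewrite Rminus_diag, Rabs_R0. auto.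
Qed.

Lemma f_integrable f lo hi : cont_on_nonneg f -> 0 <= lo <= hi -> Riemann_integrable f lo hi.
Proof.
  intros hf Hl. apply (Riemann_integrable_ext (fun t => f (Rmax 0 t))).
  - intros t Ht. rewrite Rmin_left in Ht by lra. rewrite Rmax_right; [reflexivity|lra].
  - apply continuity_implies_RiemannInt. lra. intros; apply fe_cont; auto.
Qed.

Lemma Rint_eq f lo hi (pr : Riemann_integrable f lo hi) : Rint f lo hi = RiemannInt pr.
Proof.
  unfold Rint.
  destruct (epsilon_spec (inhabits 0)
    (fun I => exists pr : Riemann_integrable f lo hi, RiemannInt pr = I)
    (ex_intro _ (RiemannInt pr) (ex_intro _ pr eq_refl))) as [pr' Hpr'].
  rewrite <- Hpr'. apply RiemannInt_P5.
Qed.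

Lemma Rint_bounds f lo hi c d : cont_on_nonneg f -> 0 <= lo <= hi ->
  (forall t, lo <= t <= hi -> c <= f t <= d) ->
  c * (hi - lo) <= Rint f lo hi <= d * (hi - lo).
Proof.
  intros hf Hl Hb. assert (pr := f_integrable f lo hi hf Hl). rewrite (Rint_eq _ _ _ pr).
  split.
  - rewrite <- (RiemannInt_P15 (RiemannInt_P14 lo hi c)).
    apply RiemannInt_P19. lra. intros t Ht. unfold fct_cte. apply Hb; lra.
  - rewrite <- (RiemannInt_P15 (RiemannInt_P14 lo hi d)).
    apply RiemannInt_P19. lra. intros t Ht. unfold fct_cte. apply Hb; lra.
Qed.

Lemma series_bracket (t lo hi : nat -> R) (Llo Lhi : R) :
  (forall k, lo k <= t k <= hi k) -> is_series lo Llo -> is_series hi Lhi ->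
  exists S : R, is_series t S /\ Llo <= S <= Lhi.
Proof.
  intros Hb Hlo Hhi.
  assert (Hd : is_series (fun k => hi k - lo k) (Lhi - Llo)).
  { exact (is_series_minus _ _ _ _ Hhi Hlo). }
  assert (Hex : ex_series (fun k => t k - lo k)).
  { apply (@ex_series_le R_AbsRing R_CompleteNormedModule _ (fun k => hi k - lo k)). intros k. specialize (Hb k).
    change (norm (t k - lo k)) with (Rabs (t k - lo k)). rewrite Rabs_pos_eq; lra.
    exists (Lhi - Llo); exact Hd. }
  destruct Hex as [D HD].
  exists (Llo + D). split.
  - eapply iss_ext; [| |exact (iss_plus _ _ _ _ Hlo HD)]. intros; simpl; ring. reflexivity.
  - assert (H1 : Series (fun k => t k - lo k) <= Series (fun k => hi k - lo k)).
    { apply Series_le. intros k; specialize (Hb k); lra. exists (Lhi - Llo); exact Hd. }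
    assert (H2 : Series (fun _ => 0) <= Series (fun k => t k - lo k)).
    { apply Series_le. intros k; specialize (Hb k); lra. exists D; exact HD. }
    rewrite (is_series_unique _ _ HD), (is_series_unique _ _ Hd) in H1.
    rewrite (is_series_unique _ _ HD), (is_series_unique _ _ iss_zero) in H2. lra.
Qed.

Lemma W_nonneg a n k x : 0 <= a -> 0 <= x -> 0 <= W n k a x.
Proof.
  intros Ha Hx. rewrite W_eq by auto. apply Rmult_le_pos.
  - apply Rdiv_le_0_compat. left; apply exp_pos. apply pow_lt; lra.
  - apply Rmult_le_pos. rewrite c_prod. apply cond_pos_sum. intros; apply Rmult_le_pos.
    apply AA_nonneg. apply BB_nonneg; auto. apply pow_le. apply Rdiv_le_0_compat; lra.
Qed.

Definition mu a n x := INR n * x + a * (x / (1 + x)).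
Definition E2 a n x := INR n * (INR n + 1) * x ^ 2 + 2 * a * INR n * x * (x / (1 + x))
    + a ^ 2 * (x / (1 + x)) ^ 2 + INR n * x + a * (x / (1 + x)).

Lemma quad_series a n x c0 c1 c2 : 0 <= a -> 0 <= x ->
  is_series (fun k => W n k a x * (c0 + c1 * INR k + c2 * INR k ^ 2))
    (c0 + c1 * mu a n x + c2 * E2 a n x).
Proof.
  intros Ha Hx.
  assert (H := iss_plus _ _ _ _ (iss_plus _ _ _ _ (iss_scal c0 _ _ (mom0 a n x Ha Hx))
    (iss_scal c1 _ _ (mom1 a n x Ha Hx))) (iss_scal c2 _ _ (mom2 a n x Ha Hx))).
  eapply iss_ext; [| |exact H]; [intros; cbv beta; ring | unfold mu, E2; ring].
Qed.

Lemma T_val a alpha beta f n x S : is_series (Tterm a alpha beta f n x) S -> T a alpha beta f n x = S.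
Proof.
  intros H. apply is_series_Reals in H. unfold T.
  apply (uniqueness_sum (Tterm a alpha beta f n x)); auto.
  apply (epsilon_spec (inhabits 0) (fun s => infinite_sum (Tterm a alpha beta f n x) s)).
  exists S; auto.
Qed.

Lemma T_bracket a alpha beta f n x q0 q1 q2 r0 r1 r2 :
  0 <= a -> 0 <= alpha -> alpha <= beta -> (1 <= n)%nat -> 0 <= x -> cont_on_nonneg f ->
  (forall k t, (INR k + alpha) / (INR n + beta) <= t <= (INR k + alpha + 1) / (INR n + beta) ->
     q0 + q1 * ((INR k + alpha) / (INR n + beta)) + q2 * ((INR k + alpha) / (INR n + beta)) ^ 2
       <= f t - f x <=
     r0 + r1 * ((INR k + alpha) / (INR n + beta)) + r2 * ((INR k + alpha) / (INR n + beta)) ^ 2) ->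
  q0 + q1 * ((mu a n x + alpha) / (INR n + beta))
     + q2 * ((E2 a n x + 2 * alpha * mu a n x + alpha ^ 2) / (INR n + beta) ^ 2)
  <= T a alpha beta f n x - f x <=
  r0 + r1 * ((mu a n x + alpha) / (INR n + beta))
     + r2 * ((E2 a n x + 2 * alpha * mu a n x + alpha ^ 2) / (INR n + beta) ^ 2).
Proof.
  intros Ha Hal Hab Hn Hx hf Hb.
  assert (HnR : 1 <= INR n) by (apply (le_INR 1); auto).
  set (N := INR n + beta). assert (HN : 0 < N) by (unfold N; lra).
  assert (Hlo := quad_series a n x (f x + q0 + q1 * alpha / N + q2 * alpha ^ 2 / N ^ 2)
      (q1 / N + 2 * q2 * alpha / N ^ 2) (q2 / N ^ 2) Ha Hx).
  assert (Hhi := quad_series a n x (f x + r0 + r1 * alpha / N + r2 * alpha ^ 2 / N ^ 2)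
      (r1 / N + 2 * r2 * alpha / N ^ 2) (r2 / N ^ 2) Ha Hx).
  pose proof (fun H => series_bracket (Tterm a alpha beta f n x) _ _ _ _ H Hlo Hhi) as SB.
  match type of SB with (?P -> _) => assert (Hbr : P) end.
  2:{ destruct (SB Hbr) as [S [HS HSb]].  rewrite (T_val _ _ _ _ _ _ _ HS). split.
      - replace (q0 + q1 * ((mu a n x + alpha) / N) + q2 * ((E2 a n x + 2 * alpha * mu a n x + alpha ^ 2) / N ^ 2))
          with (f x + q0 + q1 * alpha / N + q2 * alpha ^ 2 / N ^ 2 + (q1 / N + 2 * q2 * alpha / N ^ 2) * mu a n x +
            q2 / N ^ 2 * E2 a n x - f x) by (field; lra). lra.
      - replace (r0 + r1 * ((mu a n x + alpha) / N) + r2 * ((E2 a n x + 2 * alpha * mu a n x + alpha ^ 2) / N ^ 2))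
          with (f x + r0 + r1 * alpha / N + r2 * alpha ^ 2 / N ^ 2 + (r1 / N + 2 * r2 * alpha / N ^ 2) * mu a n x +
            r2 / N ^ 2 * E2 a n x - f x) by (field; lra). lra. }
  intros k. cbv beta. unfold Tterm. fold N.
  assert (Hk := pos_INR k).
  set (u := (INR k + alpha) / N).
  assert (Hu : 0 <= u) by (unfold u; apply Rdiv_le_0_compat; lra).
  assert (Hr := Rint_bounds f ((INR k + alpha) / N) ((INR k + alpha + 1) / N)
     (f x + (q0 + q1 * u + q2 * u ^ 2)) (f x + (r0 + r1 * u + r2 * u ^ 2)) hf).
  assert (Hw : (INR k + alpha + 1) / N - (INR k + alpha) / N = / N) by (field; lra).
  rewrite Hw in Hr. fold u in Hr.
  destruct Hr as [Hr1 Hr2].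
  { split. exact Hu. unfold u. apply Rmult_le_compat_r. left; apply Rinv_0_lt_compat; lra. lra. }
  { intros t Ht. specialize (Hb k t Ht). fold N u in Hb. lra. }
  assert (HW := W_nonneg a n k x Ha Hx).
  assert (HNW : 0 <= N * W n k a x) by (apply Rmult_le_pos; lra).
  apply (Rmult_le_compat_l _ _ _ HNW) in Hr1. apply (Rmult_le_compat_l _ _ _ HNW) in Hr2.
  replace (INR k + alpha) with (u * N) in * by (unfold u; field; lra).
  split.
  - eapply Rle_trans; [|exact Hr1]. right. unfold u. field. lra.
  - eapply Rle_trans; [exact Hr2|]. right. unfold u. field. lra.
Qed.

Lemma nat_big (r : R) : exists N : nat, r < INR N.
Proof.
  destruct (archimed r) as [H1 _].
  destruct (Z_le_gt_dec 0 (up r)) as [Hz|Hz].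
  - exists (Z.to_nat (up r)). rewrite INR_IZR_INZ, Z2Nat.id by lia. lra.
  - exists 0%nat. simpl. apply Z.gt_lt in Hz. apply IZR_lt in Hz. lra.
Qed.

Lemma poly_B1 nn x s a alpha beta :
  1 <= nn -> 0 <= x -> 0 <= s <= 1 -> 0 <= a -> 0 <= alpha -> alpha <= beta ->
  Rabs (x ^ 2 * (nn - 2 * nn * beta - beta ^ 2) + nn * x + a * s + 2 * a * nn * x * s + a ^ 2 * s ^ 2
       + 2 * alpha * nn * x + 2 * alpha * a * s + alpha ^ 2)
  <= (3 + 2 * beta + beta ^ 2 + 3 * a + 2 * alpha + a ^ 2 + 2 * alpha * a + alpha ^ 2) * nn * (1 + x ^ 2).
Proof.
  intros Hn Hx Hs Ha Hal Hab.
  assert (Hx1 : x <= 1 + x ^ 2) by nra.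
  assert (H1 : 0 <= nn * x + a * s + 2 * a * nn * x * s + a ^ 2 * s ^ 2
       + 2 * alpha * nn * x + 2 * alpha * a * s + alpha ^ 2).
  { assert (0 <= a * s) by nra. assert (0 <= a * nn * x * s).
    { apply Rmult_le_pos; [|lra]. apply Rmult_le_pos; [|lra]. nra. }
    assert (0 <= alpha * nn * x) by (apply Rmult_le_pos; nra).
    assert (0 <= alpha * a * s) by (apply Rmult_le_pos; nra). nra. }
  assert (H2 : nn * x + a * s + 2 * a * nn * x * s + a ^ 2 * s ^ 2
       + 2 * alpha * nn * x + 2 * alpha * a * s + alpha ^ 2
       <= nn * ((1 + 2 * a + 2 * alpha) * x + (a + a ^ 2 + 2 * alpha * a + alpha ^ 2))).
  { assert (a * s <= nn * a) by nra. assert (a * nn * x * s <= nn * a * x).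
    { replace (a * nn * x * s) with ((nn * a * x) * s) by ring.
      assert (0 <= nn * a * x) by (apply Rmult_le_pos; nra). nra. }
    assert (s ^ 2 <= 1) by nra. assert (0 <= a ^ 2) by nra. assert (a ^ 2 * s ^ 2 <= nn * a ^ 2) by nra.
    assert (alpha * a * s <= nn * alpha * a) by nra.
    assert (alpha ^ 2 <= nn * alpha ^ 2) by nra. nra. }
  assert (H3 : Rabs (x ^ 2 * (nn - 2 * nn * beta - beta ^ 2)) <= nn * x ^ 2 * (1 + 2 * beta + beta ^ 2)).
  { rewrite Rabs_mult, (Rabs_pos_eq (x ^ 2)) by nra.
    assert (Rabs (nn - 2 * nn * beta - beta ^ 2) <= nn * (1 + 2 * beta + beta ^ 2)).
    { assert (0 <= nn * beta) by nra. assert (beta ^ 2 <= nn * beta ^ 2) by nra. apply Rabs_le. split; nra. }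
    assert (0 <= x ^ 2) by nra. nra. }
  assert (H4 : nn * ((1 + 2 * a + 2 * alpha) * x + (a + a ^ 2 + 2 * alpha * a + alpha ^ 2))
     <= nn * ((1 + 2 * a + 2 * alpha) * (1 + x ^ 2) + (a + a ^ 2 + 2 * alpha * a + alpha ^ 2) * (1 + x ^ 2))).
  { apply Rmult_le_compat_l. lra. apply Rplus_le_compat; [apply Rmult_le_compat_l; lra|].
    assert (0 <= a + a ^ 2 + 2 * alpha * a + alpha ^ 2) by nra. nra. }
  set (Y := nn * x + a * s + 2 * a * nn * x * s + a ^ 2 * s ^ 2 +
      2 * alpha * nn * x + 2 * alpha * a * s + alpha ^ 2) in *.
  replace (x ^ 2 * (nn - 2 * nn * beta - beta ^ 2) + nn * x + a * s + 2 * a * nn * x * s + a ^ 2 * s ^ 2 +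
      2 * alpha * nn * x + 2 * alpha * a * s + alpha ^ 2) with
     (x ^ 2 * (nn - 2 * nn * beta - beta ^ 2) + Y) by (unfold Y; ring).
  eapply Rle_trans. apply Rabs_triang. rewrite (Rabs_pos_eq _ H1). nra.
Qed.

Lemma div_bound1 P Z nn N : 0 <= Z -> 1 <= nn <= N -> P <= Z * nn -> P / N ^ 2 <= Z / nn.
Proof.
  intros HZ Hn HP.
  assert (HN2 : nn ^ 2 <= N ^ 2) by nra.
  destruct (Rle_lt_dec P 0) as [Hp|Hp].
  - assert (P / N ^ 2 <= 0). { unfold Rdiv. assert (0 < / N ^ 2) by (apply Rinv_0_lt_compat; nra). nra. }
    assert (0 <= Z / nn) by (apply Rdiv_le_0_compat; lra). lra.
  - apply (Rmult_le_reg_r (N ^ 2 * nn)). nra.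
    replace (P / N ^ 2 * (N ^ 2 * nn)) with (P * nn) by (field; nra).
    replace (Z / nn * (N ^ 2 * nn)) with (Z * N ^ 2) by (field; lra).
    assert (P * nn <= Z * nn * nn) by (apply Rmult_le_compat_r; lra). nra.
Qed.

Lemma div_bound_abs P Z nn N : 0 <= Z -> 1 <= nn <= N -> Rabs P <= Z * nn -> Rabs (P / N ^ 2) <= Z / nn.
Proof.
  intros HZ Hn HP. apply Rabs_le. apply Rabs_le_between in HP. split.
  - assert (H := div_bound1 (- P) Z nn N HZ Hn ltac:(lra)).
    replace (- P / N ^ 2) with (- (P / N ^ 2)) in H by (field; nra). lra.
  - apply div_bound1; auto; lra.
Qed.

Definition m1v a alpha beta n x := (mu a n x + alpha) / (INR n + beta).
Definition m2v a alpha beta n x := (E2 a n x + 2 * alpha * mu a n x + alpha ^ 2) / (INR n + beta) ^ 2.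
Definition C1 a alpha beta := 3 + 2 * beta + beta ^ 2 + 3 * a + 2 * alpha + a ^ 2 + 2 * alpha * a + alpha ^ 2.
Definition C2 a alpha beta := 2 + beta ^ 2 + a + a ^ 2 + 2 * alpha * a + alpha ^ 2.
Definition C3 a alpha := 3 + 2 * a + 2 * alpha.

Lemma B1 a alpha beta n x : 0 <= a -> 0 <= alpha -> alpha <= beta -> (1 <= n)%nat -> 0 <= x ->
  Rabs (m2v a alpha beta n x - x ^ 2) <= C1 a alpha beta * rho x / INR n.
Proof.
  intros Ha Hal Hab Hn Hx. assert (HnR : 1 <= INR n) by (apply (le_INR 1); auto).
  assert (Hs := s_range x Hx).
  replace (m2v a alpha beta n x - x ^ 2) with
   ((x ^ 2 * (INR n - 2 * INR n * beta - beta ^ 2) + INR n * x + a * (x / (1 + x)) + 2 * a * INR n * x * (x / (1 + x))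
     + a ^ 2 * (x / (1 + x)) ^ 2 + 2 * alpha * INR n * x + 2 * alpha * a * (x / (1 + x)) + alpha ^ 2) / (INR n + beta) ^ 2).
  2:{ unfold m2v, E2, mu. field. lra. }
  assert (HP := poly_B1 (INR n) x (x / (1 + x)) a alpha beta HnR Hx ltac:(lra) Ha Hal Hab).
  assert (HZ : 0 <= C1 a alpha beta * rho x) by (apply Rmult_le_pos; [unfold C1; nra | unfold rho; nra]).
  assert (H := div_bound_abs _ (C1 a alpha beta * rho x) (INR n) (INR n + beta) HZ ltac:(lra)
     ltac:(eapply Rle_trans; [exact HP| right; unfold C1, rho; ring])).
  eapply Rle_trans; [exact H|]. right. unfold Rdiv. ring.
Qed.

Lemma B3 a alpha beta n x : 0 <= a -> 0 <= alpha -> alpha <= beta -> (1 <= n)%nat -> 0 <= x ->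
  m2v a alpha beta n x - 2 * x * m1v a alpha beta n x + x ^ 2 <= C2 a alpha beta * rho x / INR n.
Proof.
  intros Ha Hal Hab Hn Hx. assert (HnR : 1 <= INR n) by (apply (le_INR 1); auto).
  assert (Hs := s_range x Hx). set (s := x / (1 + x)) in *.
  replace (m2v a alpha beta n x - 2 * x * m1v a alpha beta n x + x ^ 2) with
   (((INR n + beta ^ 2) * x ^ 2 + INR n * x - 2 * beta * (a * s + alpha) * x + a ^ 2 * s ^ 2 + a * s
      + 2 * alpha * a * s + alpha ^ 2) / (INR n + beta) ^ 2).
  2:{ unfold m2v, m1v, E2, mu. fold s. field. lra. }
  assert (HZ : 0 <= C2 a alpha beta * rho x) by (apply Rmult_le_pos; [unfold C2; nra | unfold rho; nra]).
  eapply Rle_trans. apply (div_bound1 _ (C2 a alpha beta * rho x) (INR n) (INR n + beta) HZ ltac:(lra)).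
  2: right; unfold Rdiv; ring.
  assert (0 <= beta * (a * s + alpha) * x) by (apply Rmult_le_pos; [apply Rmult_le_pos; nra|lra]).
  assert (a * s <= a) by nra. assert (s ^ 2 <= 1) by nra. assert (a ^ 2 * s ^ 2 <= a ^ 2) by nra.
  assert (alpha * a * s <= alpha * a) by nra.
  assert (Hx1 : x <= 1 + x ^ 2) by nra.
  assert (HK : 0 <= a ^ 2 + a + 2 * alpha * a + alpha ^ 2) by nra.
  assert (beta ^ 2 * x ^ 2 <= INR n * beta ^ 2 * x ^ 2) by (assert (0 <= beta ^ 2 * x ^ 2) by nra; nra).
  assert (HK2 : a ^ 2 + a + 2 * alpha * a + alpha ^ 2 <= INR n * (a ^ 2 + a + 2 * alpha * a + alpha ^ 2)) by nra.
  assert (INR n * x <= INR n * (1 + x ^ 2)) by nra.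
  unfold C2, rho. nra.
Qed.

Lemma B2 a alpha beta n x : 0 <= a -> 0 <= alpha -> alpha <= beta -> (1 <= n)%nat -> 0 <= x ->
  0 <= 2 * m1v a alpha beta n x * / (INR n + beta) + / (INR n + beta) ^ 2 <= C3 a alpha * rho x / INR n.
Proof.
  intros Ha Hal Hab Hn Hx. assert (HnR : 1 <= INR n) by (apply (le_INR 1); auto).
  assert (Hs := s_range x Hx). set (s := x / (1 + x)) in *.
  replace (2 * m1v a alpha beta n x * / (INR n + beta) + / (INR n + beta) ^ 2) with
   ((2 * (INR n * x + a * s + alpha) + 1) / (INR n + beta) ^ 2).
  2:{ unfold m1v, mu. fold s. field. lra. }
  assert (0 <= a * s) by nra. assert (0 <= INR n * x) by nra.
  split.
  - apply Rdiv_le_0_compat. lra. apply pow_lt. lra.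
  - assert (HZ : 0 <= C3 a alpha * rho x) by (apply Rmult_le_pos; [unfold C3; nra | unfold rho; nra]).
    eapply Rle_trans. apply (div_bound1 _ (C3 a alpha * rho x) (INR n) (INR n + beta) HZ ltac:(lra)).
    2: right; unfold Rdiv; ring.
    assert (a * s <= a) by nra. assert (Hx1 : 2 * x <= 1 + x ^ 2) by (assert (0 <= (x - 1) ^ 2) by apply pow2_ge_0; nra).
    assert (1 + 2 * a + 2 * alpha <= INR n * (1 + 2 * a + 2 * alpha)) by nra.
    assert (0 <= (2 + 2 * a + 2 * alpha) * x ^ 2) by nra.
    assert (2 * INR n * x <= INR n * (1 + x ^ 2)) by nra.
    assert (INR n * (2 + 2 * a + 2 * alpha) * x ^ 2 >= 0) by nra.
    unfold C3, rho. nra.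
Qed.

Lemma small_div X e nn : 0 <= X -> 0 < e -> X / e < nn -> X / nn <= e.
Proof.
  intros HX He H. assert (Hn : 0 < nn) by (assert (0 <= X / e) by (apply Rdiv_le_0_compat; lra); lra).
  apply (Rmult_le_reg_r nn). lra. replace (X / nn * nn) with X by (field; lra).
  apply (Rmult_lt_compat_r e) in H; [|lra]. replace (X / e * e) with X in H by (field; lra). lra.
Qed.

Lemma rho_pos x : 1 <= rho x.
Proof. unfold rho. nra. Qed.

Lemma g_bound_gen (L ee CA x t u hh : R) (g : R -> R) :
  0 <= u <= t -> t <= u + hh -> 0 <= hh ->
  Rabs (g t - g x) <= ee ->
  L * (u ^ 2 - x ^ 2) - Rabs L * (2 * u * hh + hh ^ 2) - ee <= L * (t ^ 2 - x ^ 2) + (g t - g x)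
  <= L * (u ^ 2 - x ^ 2) + Rabs L * (2 * u * hh + hh ^ 2) + ee.
Proof.
  intros Hu Ht Hh Hg.
  assert (HD : 0 <= t ^ 2 - u ^ 2 <= 2 * u * hh + hh ^ 2) by (split; nra).
  assert (HL : Rabs (L * (t ^ 2 - u ^ 2)) <= Rabs L * (2 * u * hh + hh ^ 2)).
  { rewrite Rabs_mult. rewrite (Rabs_pos_eq (t ^ 2 - u ^ 2)) by lra.
    apply Rmult_le_compat_l. apply Rabs_pos. lra. }
  apply Rabs_le_between in HL. apply Rabs_le_between in Hg.
  replace (L * (t ^ 2 - x ^ 2)) with (L * (u ^ 2 - x ^ 2) + L * (t ^ 2 - u ^ 2)) by ring.
  lra.
Qed.

Theorem theorem4p1 (a alpha beta : R)
  (ha : 0 <= a) (halpha : 0 <= alpha) (hab : alpha <= beta)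
  (f : R -> R) (hf : in_C_rho_k f) :
  forall eps : R, eps > 0 ->
    exists N : nat, forall n : nat, (1 <= n)%nat -> (N <= n)%nat ->
      forall x : R, 0 <= x ->
        Rabs (T a alpha beta f n x - f x) / rho x <= eps.
Proof.
  intros eps Heps. destruct hf as [hc [[M hM] [L hL]]].
  assert (HM0 : 0 <= M).
  { specialize (hM 0 (Rle_refl 0)). unfold rho in hM. assert (0 <= Rabs (f 0)) by apply Rabs_pos.
    simpl in hM. lra. }
  set (e := eps / 20). assert (He : 0 < e) by (unfold e; lra).
  destruct (hL e He) as [A0 HA0].
  set (A := Rmax A0 0). assert (HA : 0 <= A) by apply Rmax_r.
  set (M' := M + Rabs L). assert (HM' : 0 <= M') by (unfold M'; assert (0 <= Rabs L) by apply Rabs_pos; lra).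
  set (g := fun t => f t - L * rho t).
  assert (Hg1 : forall t, 0 <= t -> Rabs (g t) <= M' * rho t).
  { intros t Ht. unfold g. eapply Rle_trans. apply Rabs_triang. rewrite Rabs_Ropp, Rabs_mult.
    rewrite (Rabs_pos_eq (rho t)) by (assert (H := rho_pos t); lra). specialize (hM t Ht).
    unfold M'. lra. }
  assert (Hg2 : forall t, A <= t -> Rabs (g t) <= e * rho t).
  { intros t Ht. assert (Hr := rho_pos t).
    replace (g t) with ((f t / rho t - L) * rho t) by (unfold g; field; lra).
    rewrite Rabs_mult, (Rabs_pos_eq (rho t)) by lra.
    apply Rmult_le_compat_r. lra. left. apply HA0. unfold A in Ht. assert (H := Rmax_l A0 0). lra. }
  set (CA := M' * (1 + A ^ 2)). assert (HCA : 0 <= CA) by (unfold CA; apply Rmult_le_pos; nra).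
  assert (Hg3 : forall t, 0 <= t -> Rabs (g t) <= e * rho t + CA).
  { intros t Ht. destruct (Rle_lt_dec A t) as [H|H].
    - specialize (Hg2 t H). assert (H' := rho_pos t). nra.
    - specialize (Hg1 t Ht). assert (rho t <= 1 + A ^ 2) by (unfold rho; nra).
      assert (M' * rho t <= CA) by (unfold CA; apply Rmult_le_compat_l; lra).
      assert (H' := rho_pos t). nra. }
  set (B := A + 1 + CA / e).
  assert (HCAe : 0 <= CA / e) by (apply Rdiv_le_0_compat; lra).
  assert (HB1 : 1 <= B) by (unfold B; lra).
  assert (HBA : A <= B) by (unfold B; lra).
  assert (HB : CA <= e * B ^ 2).
  { assert (CA = e * (CA / e)) by (field; lra). assert (CA / e <= B) by (unfold B; lra).
    assert (B <= B ^ 2) by nra. nra. }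
  assert (Hgc : forall y, 0 <= y <= B + 1 -> continuity_pt (fun t => f (Rmax 0 t) - L * rho t) y).
  { intros y _. apply continuity_pt_minus. apply fe_cont; auto. unfold rho. reg. }
  destruct (Heine_cor2 Hgc (mkposreal e He)) as [d0 Hd0]. simpl in Hd0.
  set (dl := Rmin d0 1).
  assert (Hdl : 0 < dl) by (unfold dl; apply Rmin_pos; [apply cond_pos|lra]).
  assert (Hdl1 : dl <= 1) by apply Rmin_r.
  assert (Hdl0 : dl <= d0) by apply Rmin_l.
  set (K := M' * (2 + 3 * B ^ 2) / dl ^ 2 + 2 * M').
  assert (HK : 0 <= K).
  { unfold K. assert (0 <= M' * (2 + 3 * B ^ 2) / dl ^ 2).
    { apply Rdiv_le_0_compat. apply Rmult_le_pos; nra. nra. } lra. }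
  assert (Hg4 : forall x t, 0 <= x <= B -> 0 <= t -> Rabs (g t - g x) <= e + K * (t - x) ^ 2).
  { intros x t Hx Ht. assert (0 <= K * (t - x) ^ 2) by (apply Rmult_le_pos; [lra | apply pow2_ge_0]).
    destruct (Rlt_le_dec (Rabs (t - x)) dl) as [Hc|Hc].
    - apply Rabs_def2 in Hc.
      assert (Hd := Hd0 t x ltac:(lra) ltac:(lra) ltac:(apply Rabs_def1; lra)).
      rewrite (Rmax_right 0 t), (Rmax_right 0 x) in Hd by lra. unfold g. lra.
    - assert (Hsq : dl ^ 2 <= (t - x) ^ 2).
      { rewrite <- (Rabs_pos_eq dl) in Hc by lra. rewrite <- !Rsqr_pow2. apply Rsqr_le_abs_1. auto. }
      assert (H1 := Hg1 t Ht). assert (H2 := Hg1 x ltac:(lra)).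
      assert (HxB2 : x ^ 2 <= B ^ 2) by nra.
      assert (Hsq2 : 0 <= (x - (t - x)) ^ 2) by apply pow2_ge_0.
      assert (Hrt : rho t <= 1 + 2 * B ^ 2 + 2 * (t - x) ^ 2) by (unfold rho; nra).
      assert (Hrx : rho x <= 1 + B ^ 2) by (unfold rho; nra).
      assert (Hgt : Rabs (g t - g x) <= M' * (2 + 3 * B ^ 2) + 2 * M' * (t - x) ^ 2).
      { unfold Rminus at 1. eapply Rle_trans. apply Rabs_triang. rewrite Rabs_Ropp.
        assert (M' * rho t <= M' * (1 + 2 * B ^ 2 + 2 * (t - x) ^ 2)) by (apply Rmult_le_compat_l; lra).
        assert (M' * rho x <= M' * (1 + B ^ 2)) by (apply Rmult_le_compat_l; lra). nra. }
      assert (Hq : M' * (2 + 3 * B ^ 2) <= M' * (2 + 3 * B ^ 2) / dl ^ 2 * (t - x) ^ 2).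
      { assert (HP : 0 <= M' * (2 + 3 * B ^ 2)) by (apply Rmult_le_pos; nra).
        assert (1 <= (t - x) ^ 2 / dl ^ 2).
        { apply (Rmult_le_reg_r (dl ^ 2)). nra. replace ((t - x) ^ 2 / dl ^ 2 * dl ^ 2) with ((t - x) ^ 2)
            by (field; lra). lra. }
        replace (M' * (2 + 3 * B ^ 2) / dl ^ 2 * (t - x) ^ 2) with (M' * (2 + 3 * B ^ 2) * ((t - x) ^ 2 / dl ^ 2))
          by (field; lra). nra. }
      unfold K. nra. }
  set (c1 := C1 a alpha beta). set (c2 := C2 a alpha beta). set (c3 := C3 a alpha).
  assert (Hc1 : 0 <= c1) by (unfold c1, C1; nra).
  assert (Hc2 : 0 <= c2) by (unfold c2, C2; nra).
  assert (Hc3 : 0 <= c3) by (unfold c3, C3; nra).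
  assert (HLa : 0 <= Rabs L) by apply Rabs_pos.
  set (X1 := Rabs L * c1). set (X2 := Rabs L * c3). set (X3 := 2 * K * c2). set (X4 := 2 * K).
  assert (HX1 : 0 <= X1) by (unfold X1; nra). assert (HX2 : 0 <= X2) by (unfold X2; nra).
  assert (HX3 : 0 <= X3) by (unfold X3; nra). assert (HX4 : 0 <= X4) by (unfold X4; nra).
  assert (HXe : forall X, 0 <= X -> 0 <= X / e) by (intros; apply Rdiv_le_0_compat; lra).
  destruct (nat_big (X1 / e + X2 / e + X3 / e + X4 / e + c1 + 1)) as [N0 HN0].
  assert (H1e := HXe X1 HX1). assert (H2e := HXe X2 HX2). assert (H3e := HXe X3 HX3). assert (H4e := HXe X4 HX4).
  exists N0. intros n Hn1 HnN x Hx.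
  assert (HnR : INR N0 <= INR n) by (apply le_INR; auto).
  assert (Hn1R : 1 <= INR n) by (apply (le_INR 1); auto).
  assert (Q1 : X1 / INR n <= e) by (apply small_div; auto; lra).
  assert (Q2 : X2 / INR n <= e) by (apply small_div; auto; lra).
  assert (Q3 : X3 / INR n <= e) by (apply small_div; auto; lra).
  assert (Q4 : X4 / INR n <= e) by (apply small_div; auto; lra).
  assert (Q5 : c1 / INR n <= 1) by (apply (small_div c1 1); auto; lra).
  set (h := / (INR n + beta)).
  assert (Hh0 : 0 < h) by (unfold h; apply Rinv_0_lt_compat; lra).
  assert (Hh2 : h ^ 2 <= / INR n).
  { unfold h. rewrite <- Rinv_pow by lra. apply Rinv_le_contravar. lra. nra. }
  assert (Hh1 : h <= 1) by (unfold h; rewrite <- Rinv_1; apply Rinv_le_contravar; lra).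
  assert (Hrx := rho_pos x).
  set (m1 := m1v a alpha beta n x). set (m2 := m2v a alpha beta n x).
  assert (HB1' := B1 a alpha beta n x ha halpha hab Hn1 Hx). fold m2 c1 in HB1'.
  assert (HB2' := B2 a alpha beta n x ha halpha hab Hn1 Hx). fold m1 c3 h in HB2'.
  replace (/ (INR n + beta) ^ 2) with (h ^ 2) in HB2' by (unfold h; rewrite pow_inv; reflexivity).
  assert (HB3' := B3 a alpha beta n x ha halpha hab Hn1 Hx). fold m1 m2 c2 in HB3'.
  assert (P1 : Rabs L * Rabs (m2 - x ^ 2) <= e * rho x).
  { eapply Rle_trans. apply Rmult_le_compat_l. lra. exact HB1'.
    replace (Rabs L * (c1 * rho x / INR n)) with (X1 / INR n * rho x) by (unfold X1; field; lra). nra. }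
  assert (P2 : Rabs L * (2 * m1 * h + h ^ 2) <= e * rho x).
  { eapply Rle_trans. apply Rmult_le_compat_l. lra. apply HB2'.
    replace (Rabs L * (c3 * rho x / INR n)) with (X2 / INR n * rho x) by (unfold X2; field; lra). nra. }
  assert (P3 : 2 * K * (m2 - 2 * x * m1 + x ^ 2) <= e * rho x).
  { eapply Rle_trans. apply Rmult_le_compat_l. lra. exact HB3'.
    replace (2 * K * (c2 * rho x / INR n)) with (X3 / INR n * rho x) by (unfold X3; field; lra). nra. }
  assert (P4 : 2 * K * h ^ 2 <= e).
  { eapply Rle_trans. apply Rmult_le_compat_l. lra. exact Hh2.
    replace (2 * K * / INR n) with (X4 / INR n) by (unfold X4; field; lra). lra. }
  assert (P5 : m2 <= x ^ 2 + rho x).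
  { apply Rabs_le_between in HB1'. assert (c1 * rho x / INR n <= rho x).
    { replace (c1 * rho x / INR n) with (c1 / INR n * rho x) by (field; lra). nra. } lra. }
  assert (HLm : Rabs (L * (m2 - x ^ 2)) <= e * rho x) by (rewrite Rabs_mult; lra).
  apply Rabs_le_between in HLm.
  assert (Hu' : forall k, (INR k + alpha + 1) / (INR n + beta) = (INR k + alpha) / (INR n + beta) + h)
    by (intros; unfold h; field; lra).
  assert (Hfin : Rabs (T a alpha beta f n x - f x) <= 20 * e * rho x).
  2:{ apply (Rmult_le_reg_r (rho x)). lra. unfold Rdiv. rewrite Rmult_assoc, Rinv_l, Rmult_1_r by lra.
      unfold e in Hfin. lra. }
  destruct (Rle_lt_dec B x) as [HxB|HxB].
  -
    assert (Hgx : Rabs (g x) <= e * rho x) by (apply Hg2; lra).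
    assert (Hbr := T_bracket a alpha beta f n x
      (- L * x ^ 2 - Rabs L * h ^ 2 - e * (1 + 2 * h ^ 2) - CA - e * rho x) (- 2 * Rabs L * h) (L - 2 * e)
      (- L * x ^ 2 + Rabs L * h ^ 2 + e * (1 + 2 * h ^ 2) + CA + e * rho x) (2 * Rabs L * h) (L + 2 * e)
      ha halpha hab Hn1 Hx hc).
    destruct Hbr as [Hlo Hhi].
    { intros k t Ht. rewrite Hu' in Ht. set (u := (INR k + alpha) / (INR n + beta)) in *.
      assert (Hu : 0 <= u) by (unfold u; apply Rdiv_le_0_compat; [assert (H := pos_INR k); lra | lra]).
      assert (Hgt := Hg3 t ltac:(lra)).
      assert (Huh : 0 <= (u - h) ^ 2) by apply pow2_ge_0.
      assert (Ht2 : t ^ 2 <= (u + h) ^ 2) by (apply pow_incr; lra).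
      assert (Hrt : rho t <= 1 + 2 * u ^ 2 + 2 * h ^ 2) by (unfold rho; nra).
      assert (Hgg : Rabs (g t - g x) <= e * (1 + 2 * u ^ 2 + 2 * h ^ 2) + CA + e * rho x).
      { unfold Rminus at 1. eapply Rle_trans. apply Rabs_triang. rewrite Rabs_Ropp.
        assert (e * rho t <= e * (1 + 2 * u ^ 2 + 2 * h ^ 2)) by (apply Rmult_le_compat_l; lra). lra. }
      assert (HH := g_bound_gen L _ CA x t u h g ltac:(lra) ltac:(lra) ltac:(lra) Hgg).
      replace (L * (t ^ 2 - x ^ 2) + (g t - g x)) with (f t - f x) in HH by (unfold g, rho; ring).
      split; [eapply Rle_trans; [|apply HH] | eapply Rle_trans; [apply HH|]]; right; ring. }
    change ((mu a n x + alpha) / (INR n + beta)) with m1 in Hlo, Hhi.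
    change ((E2 a n x + 2 * alpha * mu a n x + alpha ^ 2) / (INR n + beta) ^ 2) with m2 in Hlo, Hhi.
    fold h in Hlo, Hhi.
    assert (Hm1h : 2 * m1 * h = 2 * ((mu a n x + alpha) / (INR n + beta)) * h) by reflexivity.
    assert (Hr1 : e * (1 + 2 * m2 + 2 * h ^ 2) <= 7 * e * rho x).
    { assert (h ^ 2 <= 1) by nra. unfold rho in *. nra. }
    assert (HCAx : CA <= e * rho x).
    { assert (B ^ 2 <= x ^ 2) by nra. unfold rho. nra. }
    apply Rabs_le. split.
    + eapply Rle_trans; [|exact Hlo].
      match goal with |- _ <= ?E => replace E with (L * (m2 - x ^ 2) - Rabs L * (2 * m1 * h + h ^ 2)
         - e * (1 + 2 * m2 + 2 * h ^ 2) - CA - e * rho x) by ring end. lra.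
    + eapply Rle_trans; [exact Hhi|].
      match goal with |- ?E <= _ => replace E with (L * (m2 - x ^ 2) + Rabs L * (2 * m1 * h + h ^ 2)
         + e * (1 + 2 * m2 + 2 * h ^ 2) + CA + e * rho x) by ring end. lra.
  -
    assert (Hbr := T_bracket a alpha beta f n x
      (- L * x ^ 2 - Rabs L * h ^ 2 - e - 2 * K * x ^ 2 - 2 * K * h ^ 2) (- 2 * Rabs L * h + 4 * K * x) (L - 2 * K)
      (- L * x ^ 2 + Rabs L * h ^ 2 + e + 2 * K * x ^ 2 + 2 * K * h ^ 2) (2 * Rabs L * h - 4 * K * x) (L + 2 * K)
      ha halpha hab Hn1 Hx hc).
    destruct Hbr as [Hlo Hhi].
    { intros k t Ht. rewrite Hu' in Ht. set (u := (INR k + alpha) / (INR n + beta)) in *.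
      assert (Hu : 0 <= u) by (unfold u; apply Rdiv_le_0_compat; [assert (H := pos_INR k); lra | lra]).
      assert (Hgt := Hg4 x t ltac:(lra) ltac:(lra)).
      assert (Htu : (t - u) ^ 2 <= h ^ 2) by (apply pow_incr; lra).
      assert (Hsq3 : 0 <= ((u - x) - (t - u)) ^ 2) by apply pow2_ge_0.
      assert (Htx : (t - x) ^ 2 <= 2 * (u - x) ^ 2 + 2 * h ^ 2) by nra.
      assert (Hgg : Rabs (g t - g x) <= e + K * (2 * (u - x) ^ 2 + 2 * h ^ 2)).
      { assert (K * (t - x) ^ 2 <= K * (2 * (u - x) ^ 2 + 2 * h ^ 2)) by (apply Rmult_le_compat_l; lra). lra. }
      assert (HH := g_bound_gen L _ CA x t u h g ltac:(lra) ltac:(lra) ltac:(lra) Hgg).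
      replace (L * (t ^ 2 - x ^ 2) + (g t - g x)) with (f t - f x) in HH by (unfold g, rho; ring).
      split; [eapply Rle_trans; [|apply HH] | eapply Rle_trans; [apply HH|]]; right; ring. }
    change ((mu a n x + alpha) / (INR n + beta)) with m1 in Hlo, Hhi.
    change ((E2 a n x + 2 * alpha * mu a n x + alpha ^ 2) / (INR n + beta) ^ 2) with m2 in Hlo, Hhi.
    fold h in Hlo, Hhi.
    assert (e <= e * rho x) by nra.
    apply Rabs_le. split.
    + eapply Rle_trans; [|exact Hlo].
      match goal with |- _ <= ?E => replace E with (L * (m2 - x ^ 2) - Rabs L * (2 * m1 * h + h ^ 2)
         - e - 2 * K * (m2 - 2 * x * m1 + x ^ 2) - 2 * K * h ^ 2) by ring end. lra.
    + eapply Rle_trans; [exact Hhi|].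
      match goal with |- ?E <= _ => replace E with (L * (m2 - x ^ 2) + Rabs L * (2 * m1 * h + h ^ 2)
         + e + 2 * K * (m2 - 2 * x * m1 + x ^ 2) + 2 * K * h ^ 2) by ring end. lra.
Qed.
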